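(* Let $N \ge 2$ and consider $N$ electrons with positions $r = (r_1,\dots,r_N) \in \mathbb{R}^{3N}$, $r_i \in \mathbb{R}^3$, each carrying a fixed spin label $\rho_i \in \{\uparrow,\downarrow\}$. For a transposition $\tau$ of two indices $i \neq j$ with $\rho_i = \rho_j$, write $\tau r$ for the configuration obtained from $r$ by exchanging $r_i$ and $r_j$. Let $K \ge 1$, let $\gamma_1,\dots,\gamma_K \in \mathbb{R}$, let $\beta_1,\beta_2 \in \mathbb{R}\setminus\{0\}$, and let $\alpha^{(1)},\dots,\alpha^{(K)} : \mathbb{R}^{3N} \to \mathbb{R}^N$ be maps that are equivariant under exchange of same-spin electrons, i.e. for every transposition $\tau$ of two same-spin indices $i,j$ and every $r$, the vector $\alpha^{(k)}(\tau r)$ is obtained from $\alpha^{(k)}(r)$ by swapping its $i$-th and $j$-th entries. Define the Sortlet ansatz $$\Psi(r) = \exp[J_\beta(r)] \sum_{k=1}^K \Psi_{\alpha^{(k)}}(r)\, e^{-\gamma_k \sum_{j=1}^N |r_j|},$$ where $$J_\beta(r) = \sum_{i<j,\ \rho_i = \rho_j} \frac{-1}{4}\,\frac{\beta_1}{\beta_1^2 + |r_i - r_j|} + \sum_{i<j,\ \rho_i \ne \rho_j} \frac{-1}{2}\,\frac{\beta_2}{\beta_2^2 + |r_i - r_j|}$$ and $\Psi_\alpha$ denotes the sortlet defined in the context. Then $\Psi$ is antisymmetric under exchange of any two electrons with the same spin: $\Psi(\tau r) = -\Psi(r)$ for every $r \in \mathbb{R}^{3N}$ and every transposition $\tau$ of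 two same-spin indices.
   Context: Sortlet: for a map $\alpha = (\alpha_1,\dots,\alpha_N) : \mathbb{R}^{3N} \to \mathbb{R}^N$ and a configuration $r$ at which the values $\alpha_1(r),\dots,\alpha_N(r)$ are pairwise distinct, let $\pi_\alpha = \pi_{\alpha(r)}$ be the unique permutation of $\{1,\dots,N\}$ with $\alpha_{\pi_\alpha(1)}(r) < \alpha_{\pi_\alpha(2)}(r) < \dots < \alpha_{\pi_\alpha(N)}(r)$ (the permutation that sorts $\alpha(r)$), and set $$\Psi_\alpha(r) = \sigma(\pi_\alpha) \prod_{i=1}^{N-1} \big(\alpha_{\pi_\alpha(i+1)}(r) - \alpha_{\pi_\alpha(i)}(r)\big),$$ where $\sigma(\pi) \in \{+1,-1\}$ is the sign (parity) of the permutation $\pi$. At configurations where two values $\alpha_i(r)$ coincide, the product of consecutive sorted differences vanishes, and $\Psi_\alpha(r) = 0$. $|\cdot|$ denotes the Euclidean norm on $\mathbb{R}^3$. *)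

(* Defs.v *)
From mathcomp Require Import all_boot all_order all_algebra all_fingroup.
From mathcomp Require Import all_classical all_reals all_analysis.
Set Implicit Arguments. Unset Strict Implicit. Unset Printing Implicit Defensive.
Import Order.TTheory GRing.Theory Num.Theory.
Local Open Scope ring_scope.

Definition point (R : realType) := 'I_3 -> R.
Definition config (R : realType) (N : nat) := 'I_N -> point R.

Definition dist3 (R : realType) (x y : point R) : R :=
  Num.sqrt (\sum_(k < 3) (x k - y k) ^+ 2).

Definition sort_perm (R : realType) (N : nat) (a : 'I_N -> R) : option 'S_N :=
  [pick s : 'S_N | [forall i : 'I_N, forall j : 'I_N,
                      (i < j)%N ==> (a (s i) < a (s j))]].

(* Sortlet Psi_alpha evaluated at the value vector a = alpha(r);
   zero when two values coincide (no strictly sorting permutation exists). *)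
Definition sortlet_val (R : realType) (N : nat) (a : 'I_N -> R) : R :=
  match sort_perm a with
  | Some s =>
      let b := fun n : nat =>
        if @insub nat (fun m => (m < N)%N) 'I_N n is Some k then a (s k) else 0 in
      (-1) ^+ (odd_perm s) * \prod_(0 <= i < N.-1) (b i.+1 - b i)
  | None => 0
  end.

Definition sortlet (R : realType) (N : nat)
  (alpha : config R N -> ('I_N -> R)) (r : config R N) : R :=
  sortlet_val (alpha r).

Definition swap_config (R : realType) (N : nat) (i j : 'I_N) (r : config R N)
  : config R N := fun k => r (tperm i j k).

(* Jastrow factor J_beta. rho : spin labels (true = up, false = down). *)
Definition jastrow (R : realType) (N : nat) (rho : 'I_N -> bool)
  (beta1 beta2 : R) (r : config R N) : R :=
  \sum_(i < N) \sum_(j < N | (i < j)%N && (rho i == rho j))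
      (- (1 / 4) * (beta1 / (beta1 ^+ 2 + dist3 (r i) (r j))))
  + \sum_(i < N) \sum_(j < N | (i < j)%N && (rho i != rho j))
      (- (1 / 2) * (beta2 / (beta2 ^+ 2 + dist3 (r i) (r j)))).

Definition norm3 (R : realType) (x : point R) : R :=
  Num.sqrt (\sum_(k < 3) (x k) ^+ 2).

Definition sortlet_ansatz (R : realType) (N K : nat) (rho : 'I_N -> bool)
  (beta1 beta2 : R) (gamma : 'I_K -> R)
  (alpha : 'I_K -> config R N -> ('I_N -> R)) (r : config R N) : R :=
  expR (jastrow rho beta1 beta2 r) *
  \sum_(k < K) (sortlet (alpha k) r * expR (- gamma k * \sum_(j < N) norm3 (r j))).

(* Main.v *)
Require Import Defs.
From mathcomp Require Import all_boot all_order all_algebra all_fingroup.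
From mathcomp Require Import all_classical all_reals all_analysis.
From mathcomp Require Import lra.
Import Order.TTheory GRing.Theory Num.Theory.
Local Open Scope ring_scope.
Set Implicit Arguments.

Lemma incr_ge (N : nat) (h : 'S_N) :
  (forall k l : 'I_N, (k < l)%N -> (h k < h l)%N) -> forall k : 'I_N, (k <= h k)%N.
Proof.
move=> hi.
suff H : forall n (k : 'I_N), val k = n -> (n <= h k)%N by move=> k; exact: H.
elim=> [|n IH] k hk; first by [].
have ltn : (n < N)%N by have := ltn_ord k; rewrite hk => /ltnW.
have h1 := IH (Ordinal ltn) erefl.
have h2 := hi (Ordinal ltn) k; rewrite hk /= in h2.
exact: leq_ltn_trans h1 (h2 (ltnSn n)).
Qed.

Lemma incr_inv (N : nat) (h : 'S_N) :
  (forall k l : 'I_N, (k < l)%N -> (h k < h l)%N) ->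
  (forall k l : 'I_N, (k < l)%N -> ((h^-1)%g k < (h^-1)%g l)%N).
Proof.
move=> hi k l kl.
case: (ltngtP ((h^-1)%g k) ((h^-1)%g l)) => // H.
  have := hi _ _ H; rewrite !permKV => lk.
  by have := ltn_trans kl lk; rewrite ltnn.
have E : (h^-1)%g l = (h^-1)%g k by apply: val_inj.
have := congr1 h E; rewrite !permKV => lk.
by move: kl; rewrite lk ltnn.
Qed.

Lemma incr_id (N : nat) (h : 'S_N) :
  (forall k l : 'I_N, (k < l)%N -> (h k < h l)%N) -> forall k, h k = k.
Proof.
move=> hi k; apply: val_inj => /=.
have h1 := @incr_ge _ h hi k.
have h2 := @incr_ge _ (h^-1)%g (@incr_inv _ h hi) (h k).
rewrite permK in h2.
by apply/eqP; rewrite eqn_leq h1 h2.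
Qed.

Lemma sorts_uniq (R : realType) (N : nat) (a : 'I_N -> R) (s1 s2 : 'S_N) :
  [forall i : 'I_N, forall j : 'I_N, (i < j)%N ==> (a (s1 i) < a (s1 j))] ->
  [forall i : 'I_N, forall j : 'I_N, (i < j)%N ==> (a (s2 i) < a (s2 j))] ->
  s1 = s2.
Proof.
move=> H1 H2.
have S1 : forall i j : 'I_N, (i < j)%N -> a (s1 i) < a (s1 j).
  by move=> i j; move/forallP: H1 => /(_ i) /forallP /(_ j) /implyP.
have S2 : forall i j : 'I_N, (i < j)%N -> a (s2 i) < a (s2 j).
  by move=> i j; move/forallP: H2 => /(_ i) /forallP /(_ j) /implyP.
pose h := (s2 * s1^-1)%g.
have hE : forall k, s1 (h k) = s2 k by move=> k; rewrite /h permM permKV.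
have hi : forall k l : 'I_N, (k < l)%N -> (h k < h l)%N.
  move=> k l kl.
  case: (ltngtP (h k) (h l)) => // H.
    have := S1 _ _ H; rewrite !hE => lt1.
    by have := S2 _ _ kl; rewrite ltNge (ltW lt1).
  have E : h l = h k by apply: val_inj.
  have := congr1 s1 E; rewrite !hE => /perm_inj lk.
  by move: kl; rewrite lk ltnn.
apply/permP => k.
by rewrite -hE (@incr_id _ h hi).
Qed.

Lemma sortlet_swap (R : realType) (N : nat) (a : 'I_N -> R) (i j : 'I_N) :
  i != j -> sortlet_val (fun m => a (tperm i j m)) = - sortlet_val a.
Proof.
move=> ij.
rewrite /sortlet_val /sort_perm.
set t := tperm i j.
have key : forall s : 'S_N,
  [forall x : 'I_N, forall y : 'I_N, (x < y)%N ==> (a (t (s x)) < a (t (s y)))] =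
  [forall x : 'I_N, forall y : 'I_N, (x < y)%N ==> (a ((s * t)%g x) < a ((s * t)%g y))].
  by move=> s; apply: eq_forallb => x; apply: eq_forallb => y; rewrite !permM.
have tt : forall s : 'S_N, (s * t * t)%g = s.
  by move=> s; apply/permP => x; rewrite !permM tpermK.
case: pickP => [s1 Hs1 | H1]; case: pickP => [s0 Hs0 | H0] /=.
- rewrite key in Hs1.
  have E := @sorts_uniq _ _ a _ _ Hs0 Hs1; subst s0.
  rewrite odd_permM odd_tperm ij.
  rewrite -mulNr; congr (_ * _).
    by case: (odd_perm s1); rewrite /= ?expr0 ?expr1 ?opprK.
  apply: eq_bigr => n _.
  have tE : forall x, (s1 * t)%g x = t (s1 x) by move=> x; rewrite permM.
  case: insub => [k|]; case: insub => [k'|] /=;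
    by rewrite ?(congr1 a (tE k)) ?(congr1 a (tE k')).
- by rewrite key in Hs1; have := H0 (s1 * t)%g; rewrite Hs1.
- by have := H1 (s0 * t)%g; rewrite key tt Hs0.
- by rewrite oppr0.
Qed.

Lemma pair_sum (R : realType) (N : nat) (P : 'I_N -> 'I_N -> bool)
  (G : 'I_N -> 'I_N -> R) :
  (forall a b, P a b = P b a) -> (forall a b, G a b = G b a) ->
  (\sum_(a : 'I_N) \sum_(b : 'I_N | (a < b)%N && P a b) G a b) *+ 2
  = \sum_(a : 'I_N) \sum_(b : 'I_N | (a != b) && P a b) G a b.
Proof.
move=> PC GC.
have E : forall F : 'I_N -> 'I_N -> bool,
  \sum_(a : 'I_N) \sum_(b : 'I_N | F a b) G a b = \sum_(a : 'I_N) \sum_(b : 'I_N) (if F a b then G a b else 0).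
  by move=> F; apply: eq_bigr => a _; rewrite big_mkcond.
rewrite mulr2n !E {2}exchange_big -big_split /=; apply: eq_bigr => a _.
rewrite -big_split /=; apply: eq_bigr => b _.
rewrite (PC b a) (GC b a) -(inj_eq val_inj) /=.
case: (ltngtP a b) => //= H; rewrite ?addr0 ?add0r //.
Qed.

Lemma pair_inv (R : realType) (N : nat) (P : 'I_N -> 'I_N -> bool)
  (G : 'I_N -> 'I_N -> R) (t : 'S_N) :
  (forall a b, P a b = P b a) -> (forall a b, G a b = G b a) ->
  (forall a b, P (t a) (t b) = P a b) ->
  \sum_(a : 'I_N) \sum_(b : 'I_N | (a < b)%N && P a b) G (t a) (t b)
  = \sum_(a : 'I_N) \sum_(b : 'I_N | (a < b)%N && P a b) G a b.
Proof.
move=> PC GC Pt.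
have : (\sum_(a : 'I_N) \sum_(b : 'I_N | (a < b)%N && P a b) G (t a) (t b)) *+ 2
     = (\sum_(a : 'I_N) \sum_(b : 'I_N | (a < b)%N && P a b) G a b) *+ 2.
  have GtC : forall a b, G (t a) (t b) = G (t b) (t a) by move=> a b; apply: GC.
  rewrite (@pair_sum _ _ P (fun a b => G (t a) (t b)) PC GtC) (@pair_sum _ _ P G PC GC).
  rewrite [RHS](reindex_inj (@perm_inj _ t)) /=.
  apply: eq_bigr => a _.
  rewrite [RHS](reindex_inj (@perm_inj _ t)) /=.
  apply: eq_bigl => b.
  by rewrite (inj_eq perm_inj) Pt.
rewrite !mulr2n => H; lra.
Qed.

Lemma dist3C (R : realType) (x y : 'I_3 -> R) : dist3 x y = dist3 y x.
Proof.
rewrite /dist3; congr Num.sqrt; apply: eq_bigr => k _.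
by rewrite -sqrrN opprB.
Qed.

Unset Implicit Arguments.

Theorem mainTheorem1 (R : realType) (N K : nat) (rho : 'I_N -> bool)
  (gamma : 'I_K -> R) (beta1 beta2 : R)
  (alpha : 'I_K -> config R N -> ('I_N -> R)) :
  (2 <= N)%N -> (1 <= K)%N -> beta1 != 0 -> beta2 != 0 ->
  (forall (k : 'I_K) (i j : 'I_N), i != j -> rho i = rho j ->
     forall r : config R N,
       alpha k (swap_config i j r) = (fun m => alpha k r (tperm i j m))) ->
  forall (i j : 'I_N), i != j -> rho i = rho j ->
  forall r : config R N,
    sortlet_ansatz rho beta1 beta2 gamma alpha (swap_config i j r)
    = - sortlet_ansatz rho beta1 beta2 gamma alpha r.
Proof.
move=> _ _ _ _ Halpha i j ij rij r.
have rhot : forall m, rho (tperm i j m) = rho m.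
  by move=> m; case: tpermP => // ->.
have J : jastrow rho beta1 beta2 (swap_config i j r) = jastrow rho beta1 beta2 r.
  have E1 := @pair_inv _ _ (fun a b => rho a == rho b)
      (fun a b => - (1 / 4) * (beta1 / (beta1 ^+ 2 + dist3 (r a) (r b)))) (tperm i j)
      (fun a b => eq_sym _ _) ltac:(by move=> a b /=; rewrite dist3C)
      (fun a b => congr2 _ (rhot a) (rhot b)).
  have E2 := @pair_inv _ _ (fun a b => rho a != rho b)
      (fun a b => - (1 / 2) * (beta2 / (beta2 ^+ 2 + dist3 (r a) (r b)))) (tperm i j)
      (fun a b => congr1 negb (eq_sym _ _)) ltac:(by move=> a b /=; rewrite dist3C)
      (fun a b => congr1 negb (congr2 _ (rhot a) (rhot b))).
  rewrite /jastrow /swap_config.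
  rewrite E1.
  rewrite E2.
  done.
have Nr : \sum_(m < N) norm3 (swap_config i j r m) = \sum_(m < N) norm3 (r m).
  rewrite /swap_config [RHS](reindex_inj (@perm_inj _ (tperm i j))) //.
rewrite /sortlet_ansatz J Nr -mulrN -sumrN; congr (_ * _).
apply: eq_bigr => k _.
by rewrite /sortlet Halpha // sortlet_swap // mulNr.
Qed.
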